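(* Let $\alpha>-1$, $d\in\widetilde{D}$, $p=(L_n^{(\alpha)})_{n\in\mathbb{N}_0}$, $q=(L_n^{(\alpha+1)})_{n\in\mathbb{N}_0}$, and let $T=E_{p,d}$ be regarded as an operator in $H(q)$ with domain $\mathcal{P}_c$. For $g=\sum_kg_kq_k\in H(q)$: (i) $g\in D(T^* )$ iff $\sum_{k=0}^\infty\left|g_k\bar d_k+\sum_{t=0}^{k-1}(\bar d_t-\bar d_{t+1})g_t\right|^2<\infty$; (ii) for $g\in D(T^* )$, $T^*g=\sum_{k=0}^\infty\left[g_k\bar d_k+\sum_{t=0}^{k-1}(\bar d_t-\bar d_{t+1})g_t\right]q_k$; (iii) for fixed $j\in\mathbb{N}_0$, $q_j\in D(T^* )$ iff $\bar d_j-\bar d_{j+1}=0$; (iv) $E_{L^{(\alpha)},d}$ is unbounded as an operator in $H(q)$, for every $d\in\widetilde{D}$.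
   Context: $\mathcal{P}_c$ is the space of polynomials in one real variable with complex coefficients. For $\beta>-1$, $L_n^{(\beta)}(x)=\sum_{k=0}^n\frac{(-1)^k}{k!}\binom{n+\beta}{n-k}x^k$ is the generalized Laguerre polynomial. For a sequence $Q=(Q_n)$ of polynomials with $\deg Q_n=n$, $H(Q)$ is the completion of $\mathcal{P}_c$ with respect to the inner product making $(Q_n)$ orthonormal (so here the unnormalized $L_n^{(\alpha+1)}$ are orthonormal); $g\in H(Q)$ is written $g=\sum_kg_kQ_k$, $(g_k)\in\ell_2$. $\widetilde{D}$ is the set of non-constant sequences of non-zero complex numbers. For a polynomial sequence $p$ and $d\in\widetilde{D}$, $E_{p,d}$ is the linear map on $\mathcal{P}_c$ with $E_{p,d}(p_n)=d_np_n$. $T^*$ is the Hilbert space adjoint. *)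

(* Defs.v *)
From HB Require Import structures.
From mathcomp Require Import all_boot all_order all_algebra.
From mathcomp Require Import complex reals.
From Stdlib Require Import ClassicalEpsilon.
Set Implicit Arguments. Unset Strict Implicit. Unset Printing Implicit Defensive.
Import Order.TTheory GRing.Theory Num.Theory.
Local Open Scope ring_scope.
Local Open Scope complex_scope.

Section Laguerre.
Variable R : realType.
Local Notation C := R[i].

Definition gbinom (x : C) (m : nat) : C :=
  (\prod_(i < m) (x - i%:R)) / (m`!)%:R.

Definition laguerre (beta : R) (n : nat) : {poly C} :=
  \sum_(k < n.+1)
    (((-1) ^+ k / (k`!)%:R) * gbinom (n%:R + beta%:C) (n - k)) *: 'X^k.

Definition is_coords (Q : nat -> {poly C}) (f : {poly C}) (c : nat -> C) :=
  (forall k, (size f <= k)%N -> c k = 0) /\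
  f = \sum_(k < size f) c k *: Q k.

Definition coords (Q : nat -> {poly C}) (f : {poly C}) : nat -> C :=
  epsilon (inhabits (fun _ => 0)) (fun c => is_coords Q f c).

Definition qseq (alpha : R) : nat -> {poly C} := laguerre (alpha + 1).
Definition pseq (alpha : R) : nat -> {poly C} := laguerre alpha.

Definition normsq (z : C) : R := (@complex.Re R z) ^+ 2 + (@complex.Im R z) ^+ 2.

Definition ell2 (g : nat -> C) : Prop :=
  exists M : R, forall n, \sum_(k < n) normsq (g k) <= M.

Definition Dtilde (d : nat -> C) : Prop :=
  (forall n, d n != 0) /\ exists m n, d m != d n.

Definition Epd (P : nat -> {poly C}) (d : nat -> C) (f : {poly C}) : {poly C} :=
  \sum_(n < size f) (coords P f n * d n) *: P n.

(* H(q) is identified with l_2 through g = sum_k g_k q_k  <->  (g_k).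
   Inner product <f, g>_{H(q)} of a polynomial f with g = sum_k g_k q_k *)
Definition ipH (Q : nat -> {poly C}) (f : {poly C}) (g : nat -> C) : C :=
  \sum_(k < size f) coords Q f k * (g k)^*.

Definition normH (Q : nat -> {poly C}) (f : {poly C}) : R :=
  Num.sqrt (\sum_(k < size f) normsq (coords Q f k)).

Definition in_dom_adj (Q : nat -> {poly C}) (T : {poly C} -> {poly C})
    (g : nat -> C) : Prop :=
  ell2 g /\ exists h, ell2 h /\ forall f, ipH Q (T f) g = ipH Q f h.

Definition is_adj_value (Q : nat -> {poly C}) (T : {poly C} -> {poly C})
    (g h : nat -> C) : Prop :=
  ell2 h /\ forall f, ipH Q (T f) g = ipH Q f h.

Definition adjcoef (d g : nat -> C) (k : nat) : C :=
  g k * (d k)^* + \sum_(t < k) ((d t)^* - (d t.+1)^*) * g t.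

End Laguerre.

(* Main.v *)
Require Import Defs.
From HB Require Import structures.
From mathcomp Require Import all_boot all_order all_algebra.
From mathcomp Require Import complex reals.
From mathcomp Require Import ring lra.
From Stdlib Require Import ClassicalEpsilon FunctionalExtensionality Classical.
Import Order.TTheory GRing.Theory Num.Theory.
Local Open Scope ring_scope.

Lemma widen_sum (V : zmodType) N M (F : nat -> V) : (N <= M)%N ->
  (forall k, (N <= k)%N -> F k = 0) ->
  \sum_(k < N) F k = \sum_(k < M) F k.
Proof.
move=> NM F0; rewrite -(big_mkord xpredT) -(big_mkord xpredT F).
rewrite (big_cat_nat (leq0n N) NM) /=.
rewrite [X in _ + X](_ : _ = 0) ?addr0 //.
rewrite big_nat_cond big1 // => i /andP[/andP[Hi _] _].
exact: F0.
Qed.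

Section Basis.
Variable R : realType.
Local Notation C := R[i].
Variable B : nat -> {poly C}.
Hypothesis sizeB : forall n, size (B n) = n.+1.

Definition rep N (c : nat -> C) f :=
  (forall k, (N <= k)%N -> c k = 0) /\ f = \sum_(k < N) c k *: B k.

Lemma size_sumB N (c : nat -> C) : (size (\sum_(k < N) c k *: B k)%R <= N)%N.
Proof.
elim: N => [|N IH]; first by rewrite big_ord0 size_poly0.
rewrite big_ord_recr /=; apply: leq_trans (size_polyD _ _) _.
rewrite geq_max (leq_trans IH) //.
by rewrite (leq_trans (size_scale_leq _ _)) // sizeB.
Qed.

Lemma indepB N (c : nat -> C) : \sum_(k < N) c k *: B k = 0 ->
  forall k, (k < N)%N -> c k = 0.
Proof.
elim: N => [|N IH] H k; first by [].
move: H; rewrite big_ord_recr /= => H.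
have cN : c N = 0.
  have := congr1 (fun p : {poly C} => p`_N) H.
  rewrite coefD coefZ coef0.
  have /leq_sizeP -> // := size_sumB N c.
  rewrite add0r => /eqP; rewrite mulf_eq0 => /orP[/eqP //|].
  have : lead_coef (B N) != 0 by rewrite lead_coef_eq0 -size_poly_eq0 sizeB.
  by rewrite lead_coefE sizeB /= => /negPf ->.
move: H; rewrite cN scale0r addr0 => H.
rewrite ltnS leq_eqVlt => /orP[/eqP -> //|]; exact: IH.
Qed.

Lemma rep_widen N M c f : (N <= M)%N -> rep N c f -> rep M c f.
Proof.
move=> NM [H0 Hf]; split; first by move=> k Mk; rewrite H0 // (leq_trans NM Mk).
rewrite Hf; apply: (@widen_sum _ N M (fun k => c k *: B k)) => // k Nk; by rewrite H0 // scale0r.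
Qed.

Lemma rep_exists n (f : {poly C}) : (size f <= n)%N -> exists c, rep n c f.
Proof.
elim: n f => [|n IH] f Hf.
  exists (fun _ => 0); split => //; rewrite big_ord0.
  by apply/eqP; rewrite -size_poly_eq0 -leqn0.
pose a := f`_n / lead_coef (B n).
have lnz : lead_coef (B n) != 0 by rewrite lead_coef_eq0 -size_poly_eq0 sizeB.
have : (size (f - a *: B n)%R <= n)%N.
  apply/leq_sizeP => j; rewrite leq_eqVlt => /orP[/eqP <-|nj].
    have Bn : (B n)`_n = lead_coef (B n) by rewrite lead_coefE sizeB.
    by rewrite coefB coefZ /a Bn mulfVK // subrr.
  rewrite coefB coefZ.
  have /leq_sizeP -> // := Hf.
  have /leq_sizeP -> // : (size (B n) <= n.+1)%N by rewrite sizeB.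
  by rewrite mulr0 subrr.
move=> /IH [c [c0 cf]].
exists (fun k => if k == n then a else c k); split.
  move=> k nk; case: eqP => [Ekn|_]; first by move: nk; rewrite Ekn ltnn.
  by apply: c0; apply: ltnW.
rewrite big_ord_recr /= eqxx.
rewrite (eq_bigr (fun k : 'I_n => c k *: B k)); last first.
  by move=> [k kn] _ /=; rewrite (ltn_eqF kn).
by rewrite -cf subrK.
Qed.

Lemma rep_uniq N c1 c2 f : rep N c1 f -> rep N c2 f -> forall k, c1 k = c2 k.
Proof.
move=> [H1 f1] [H2 f2] k.
case: (ltnP k N) => kN; last by rewrite H1 // H2.
apply/eqP; rewrite -subr_eq0; apply/eqP.
apply: (@indepB N (fun k => c1 k - c2 k)) => //.
rewrite (eq_bigr (fun k : 'I_N => c1 k *: B k - c2 k *: B k)); last first.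
  by move=> i _; rewrite scalerBl.
by rewrite sumrB -f1 -f2 subrr.
Qed.

Lemma coords_is (f : {poly C}) : rep (size f) (coords B f) f.
Proof.
have : exists c, is_coords B f c.
  have [c Hc] := @rep_exists _ f (leqnn _); by exists c.
by move=> /(epsilon_spec (inhabits (fun _ => 0))).
Qed.

Lemma coords_rep N c f : rep N c f -> coords B f = c.
Proof.
move=> Hc; apply: functional_extensionality => k.
apply: (@rep_uniq (maxn N (size f))).
  by apply: rep_widen (coords_is f); rewrite leq_maxr.
by apply: rep_widen Hc; rewrite leq_maxl.
Qed.

Lemma coords0 (f : {poly C}) k : (size f <= k)%N -> coords B f k = 0.
Proof. by case: (coords_is f) => H _; apply: H. Qed.

Lemma sum_coords (V : zmodType) (G : nat -> C -> V) (f : {poly C}) N :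
  (forall k, G k 0 = 0) -> (size f <= N)%N ->
  \sum_(k < size f) G k (coords B f k) = \sum_(k < N) G k (coords B f k).
Proof.
move=> G0 fN; apply: (@widen_sum _ _ _ (fun k => G k (coords B f k))) => // k fk; by rewrite coords0.
Qed.

Lemma coords_lin a (f1 f2 : {poly C}) :
  coords B (a *: f1 + f2) = fun k => a * coords B f1 k + coords B f2 k.
Proof.
have [H1 E1] := @rep_widen _ _ _ _ (leq_maxl (size f1) (size f2)) (coords_is f1).
have [H2 E2] := @rep_widen _ _ _ _ (leq_maxr (size f1) (size f2)) (coords_is f2).
set M := maxn (size f1) (size f2) in H1 E1 H2 E2 *.
apply: (@coords_rep M); split.
  by move=> k Mk; rewrite H1 // H2 // mulr0 addr0.
have -> : a *: f1 + f2 = a *: (\sum_(k<M) coords B f1 k *: B k) + \sum_(k<M) coords B f2 k *: B k by rewrite -E1 -E2.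
rewrite scaler_sumr -big_split /=.
by apply: eq_bigr => i _; rewrite scalerDl scalerA.
Qed.

Lemma size_lin a (f1 f2 : {poly C}) :
  (size (a *: f1 + f2)%R <= maxn (size f1) (size f2))%N.
Proof.
apply: leq_trans (size_polyD _ _) _.
by rewrite geq_max leq_maxr (leq_trans (size_scale_leq _ _)) ?leq_maxl.
Qed.

End Basis.
Arguments rep {R}.
Arguments coords_rep {R B} sizeB {N c f}.
Arguments sum_coords {R B} sizeB {V} G f N.
Arguments coords0 {R B} sizeB f k.
Arguments coords_lin {R B} sizeB a f1 f2.
Arguments size_sumB {R B} sizeB N c.
Arguments coords_is {R B} sizeB f.

Section Ip.
Variable R : realType.
Local Notation C := R[i].
Variable B : nat -> {poly C}.
Hypothesis sizeB : forall n, size (B n) = n.+1.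

Lemma ipH_N (f : {poly C}) g N : (size f <= N)%N ->
  ipH B f g = \sum_(k < N) coords B f k * (g k)^*.
Proof.
move=> fN; rewrite /ipH.
exact: (@sum_coords R B sizeB _ (fun k x => x * (g k)^*) f N (fun k => mul0r _) fN).
Qed.

Lemma ipH_lin a (f1 f2 : {poly C}) g :
  ipH B (a *: f1 + f2) g = a * ipH B f1 g + ipH B f2 g.
Proof.
set M := maxn (size f1) (size f2).
rewrite (@ipH_N _ _ M) ?size_lin // (@ipH_N f1 _ M) ?leq_maxl //.
rewrite (@ipH_N f2 _ M) ?leq_maxr // (coords_lin sizeB) mulr_sumr -big_split /=.
by apply: eq_bigr => i _; rewrite mulrDl mulrA.
Qed.

Lemma ipH0 g : ipH B 0 g = 0.
Proof. by rewrite /ipH size_poly0 big_ord0. Qed.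

Lemma ipH_sum N (c : nat -> C) (F : nat -> {poly C}) g :
  ipH B (\sum_(k < N) c k *: F k) g = \sum_(k < N) c k * ipH B (F k) g.
Proof.
elim: N => [|N IH]; first by rewrite !big_ord0 ipH0.
by rewrite !big_ord_recr /= addrC ipH_lin IH addrC.
Qed.

Lemma ipH_rep N c (f : {poly C}) g : rep B N c f ->
  ipH B f g = \sum_(k < N) c k * (g k)^*.
Proof.
move=> Hr; rewrite (@ipH_N _ _ N) ?(coords_rep sizeB Hr) //.
by case: Hr => _ ->; exact: size_sumB.
Qed.

Variable d : nat -> C.

Lemma Epd_N (f : {poly C}) N : (size f <= N)%N ->
  Epd B d f = \sum_(k < N) (coords B f k * d k) *: B k.
Proof.
move=> fN; rewrite /Epd.
exact: (@sum_coords R B sizeB _ (fun k x => (x * d k) *: B k) f N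
  (fun k => etrans (congr1 (fun y => y *: B k) (mul0r _)) (scale0r _)) fN).
Qed.

Lemma Epd_lin a (f1 f2 : {poly C}) :
  Epd B d (a *: f1 + f2) = a *: Epd B d f1 + Epd B d f2.
Proof.
set M := maxn (size f1) (size f2).
rewrite (@Epd_N _ M) ?size_lin // (@Epd_N f1 M) ?leq_maxl //.
rewrite (@Epd_N f2 M) ?leq_maxr // (coords_lin sizeB) scaler_sumr -big_split /=.
by apply: eq_bigr => i _; rewrite scalerA -scalerDl mulrDl mulrA.
Qed.

Lemma Epd0 : Epd B d 0 = 0.
Proof. by rewrite /Epd size_poly0 big_ord0. Qed.

Lemma Epd_sum N (c : nat -> C) (F : nat -> {poly C}) :
  Epd B d (\sum_(k < N) c k *: F k) = \sum_(k < N) c k *: Epd B d (F k).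
Proof.
elim: N => [|N IH]; first by rewrite !big_ord0 Epd0.
by rewrite !big_ord_recr /= addrC Epd_lin IH addrC.
Qed.

Lemma Epd_rep N c (f : {poly C}) : rep B N c f ->
  Epd B d f = \sum_(k < N) (c k * d k) *: B k.
Proof.
move=> Hr; rewrite (@Epd_N _ N) ?(coords_rep sizeB Hr) //.
by case: Hr => _ ->; exact: size_sumB.
Qed.

Lemma coords_sum N (c : nat -> C) (F : nat -> {poly C}) j :
  coords B (\sum_(k < N) c k *: F k) j = \sum_(k < N) c k * coords B (F k) j.
Proof.
elim: N => [|N IH].
  rewrite !big_ord0; apply: (coords0 sizeB 0 j); by rewrite size_poly0.
by rewrite !big_ord_recr /= addrC (coords_lin sizeB) IH addrC.
Qed.

End Ip.
Arguments ipH_rep {R B} sizeB {N c f} g.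
Arguments Epd_rep {R B} sizeB d {N c f}.
Arguments ipH_sum {R B} sizeB N c F g.
Arguments Epd_sum {R B} sizeB d N c F.
Arguments coords_sum {R B} sizeB N c F j.
Arguments ipH_N {R B} sizeB f g N.

Section Lag.
Variable R : realType.
Local Notation C := R[i].

Definition lc (b : R) n k : C :=
  ((-1) ^+ k / (k`!)%:R) * gbinom (n%:R + b%:C%C) (n - k).

Lemma lag_poly (b : R) n : laguerre b n = \poly_(k < n.+1) lc b n k.
Proof. by rewrite poly_def. Qed.

Lemma gbinom0 (x : C) : gbinom x 0 = 1.
Proof. by rewrite /gbinom big_ord0 fact0 invr1 mulr1. Qed.

Lemma fact_neq0 n : (n`!)%:R != 0 :> C.
Proof. by rewrite pnatr_eq0 -lt0n fact_gt0. Qed.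

Lemma size_lag (b : R) n : size (laguerre b n) = n.+1.
Proof.
rewrite lag_poly size_poly_eq // /lc subnn gbinom0 mulr1.
rewrite mulf_neq0 ?invr_eq0 ?fact_neq0 //.
by rewrite expf_neq0 // oppr_eq0 oner_eq0.
Qed.

Lemma gbinomS (x : C) m : gbinom (x + 1) m.+1 = gbinom x m.+1 + gbinom x m.
Proof.
rewrite /gbinom big_ord_recl big_ord_recr /= factS natrM.
rewrite (eq_bigr (fun i : 'I_m => x - i%:R)); last first.
  by move=> i _; rewrite /bump /= add1n -addn1 natrD; ring.
set P := \prod_(i < m) (x - i%:R).
have h1 := fact_neq0 m.
have h2 : (m.+1)%:R != 0 :> C by rewrite pnatr_eq0.
rewrite subr0; field.
by move: h2; rewrite -natr1 addrC => ->; rewrite h1.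
Qed.

Lemma lag_rec (a : R) n : laguerre (a + 1) n.+1 = laguerre (a + 1) n + laguerre a n.+1.
Proof.
apply/polyP => k; rewrite !lag_poly coefD !coef_poly.
case: (ltngtP k n.+1) => [kn | nk | ->].
- have -> : (k < n.+2)%N by rewrite ltnS ltnW.
  rewrite /lc.
  have -> : (n.+1 - k)%N = (n - k).+1 by rewrite subSn // -ltnS.
  rewrite -mulrDr; congr (_ * _).
  have E1 : (n.+1)%:R + (a + 1)%:C%C = ((n.+1)%:R + a%:C%C) + 1 :> C.
    by rewrite rmorphD rmorph1 /=; ring.
  have E2 : n%:R + (a + 1)%:C%C = (n.+1)%:R + a%:C%C :> C.
    by rewrite rmorphD rmorph1 -addn1 natrD /=; ring.
  by rewrite E1 E2 gbinomS addrC.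
- have h1 : (k < n.+2)%N = false by rewrite ltnNge nk.
  have h2 : (k < n.+1)%N = false by rewrite ltnNge (ltnW nk).
  by rewrite ?h1 ?h2 addr0.
- by rewrite ltnSn add0r /lc !subnn !gbinom0.
Qed.

Lemma lag_0 (a : R) : laguerre (a + 1) 0 = laguerre a 0.
Proof. by rewrite !lag_poly; apply/polyP => k; rewrite !coef_poly /lc !gbinom0. Qed.

End Lag.

Section Main.
Variable R : realType.
Local Notation C := R[i].
Variable a : R.
Local Notation P := (pseq a).
Local Notation Q := (qseq a).

Lemma sizeP n : size (P n) = n.+1. Proof. exact: size_lag. Qed.
Lemma sizeQ n : size (Q n) = n.+1. Proof. exact: size_lag. Qed.

Lemma PQ0 : P 0 = Q 0. Proof. by rewrite /pseq /qseq lag_0. Qed.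
Lemma PQS n : P n.+1 = Q n.+1 - Q n.
Proof. by rewrite /pseq /qseq lag_rec addrC addKr. Qed.

Lemma q_sum_p k : Q k = \sum_(n < k.+1) P n.
Proof.
elim: k => [|k IH]; first by rewrite big_ord1 PQ0.
by rewrite big_ord_recr /= -IH PQS addrC subrK.
Qed.

Lemma rep_q_p k : rep P k.+1 (fun n => if (n < k.+1)%N then 1 else 0) (Q k).
Proof.
split; first by move=> n kn; rewrite ltnNge kn.
rewrite q_sum_p; apply: eq_bigr => i _; by rewrite ltn_ord scale1r.
Qed.

Definition ee (d : nat -> C) m i :=
  if (i < m)%N then d i - d i.+1 else if i == m then d m else 0.

Lemma ee_lt (d : nat -> C) m i : (i < m)%N -> ee d m i = d i - d i.+1.
Proof. by rewrite /ee => ->. Qed.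
Lemma ee_eq (d : nat -> C) m : ee d m m = d m.
Proof. by rewrite /ee ltnn eqxx. Qed.

Lemma SPQ (d : nat -> C) m : \sum_(n < m.+1) d n *: P n = \sum_(i < m.+1) ee d m i *: Q i.
Proof.
elim: m => [|m IH].
  by rewrite !big_ord_recr !big_ord0 /= PQ0 ee_eq.
rewrite big_ord_recr /= IH PQS.
rewrite [in RHS]big_ord_recr [in RHS]big_ord_recr /= big_ord_recr /=.
rewrite ee_eq (@ee_lt _ m.+1 m (ltnSn m)) ee_eq.
rewrite [\sum_(i < m) ee d m.+1 i *: _](eq_bigr (fun i : 'I_m => ee d m i *: Q i)); last first.
  by move=> i _; have h := ltn_ord i; rewrite !ee_lt // ltnW.
rewrite scalerBr scalerBl.
set A := \sum_(i < m) _.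
set x := d m *: Q m. set y := d m.+1 *: Q m.+1. set z := d m.+1 *: Q m.
clearbody A x y z; ring.
Qed.

Lemma rep_Tq (d : nat -> C) m : rep Q m.+1 (ee d m) (Epd P d (Q m)).
Proof.
split.
  move=> k mk; rewrite /ee ltnNge (ltnW mk) /=.
  by rewrite gtn_eqF.
rewrite (Epd_rep sizeP d (rep_q_p m)) -SPQ.
apply: eq_bigr => i _; by rewrite ltn_ord mul1r.
Qed.

Lemma coords_Tq (d : nat -> C) m : coords Q (Epd P d (Q m)) = ee d m.
Proof. exact: (coords_rep sizeQ (rep_Tq d m)). Qed.

Lemma ipH_Tq (d g : nat -> C) k : ipH Q (Epd P d (Q k)) g = (adjcoef d g k)^*.
Proof.
rewrite (ipH_rep sizeQ g (rep_Tq d k)) big_ord_recr /= ee_eq.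
rewrite /adjcoef rmorphD rmorphM rmorph_sum /=.
rewrite conjCK addrC mulrC.


congr (_ + _); apply: eq_bigr => i _.
by rewrite ee_lt ?ltn_ord // rmorphM rmorphB /= !conjCK.
Qed.

Definition delta (k i : nat) : C := if i == k then 1 else 0.

Lemma rep_Qk k : rep Q k.+1 (delta k) (Q k).
Proof.
split; first by move=> i ki; rewrite /delta gtn_eqF.
rewrite big_ord_recr /= /delta eqxx scale1r big1 ?add0r //.
by move=> i _; rewrite ltn_eqF // scale0r.
Qed.

Lemma coords_Qk k : coords Q (Q k) = delta k.
Proof. exact: (coords_rep sizeQ (rep_Qk k)). Qed.

Lemma ipH_Qk (h : nat -> C) k : ipH Q (Q k) h = (h k)^*.
Proof.
rewrite (ipH_rep sizeQ h (rep_Qk k)) big_ord_recr /= /delta eqxx mul1r.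
by rewrite big1 ?add0r // => i _; rewrite ltn_eqF // mul0r.
Qed.

End Main.

Section Norms.
Variable R : realType.
Local Notation C := R[i].

Lemma normsq_ge0 (z : C) : 0 <= normsq z.
Proof. by rewrite /normsq addr_ge0 // sqr_ge0. Qed.

Lemma normsq0 : normsq (0 : C) = 0.
Proof. by rewrite /normsq /= expr0n /= addr0. Qed.

Lemma normsq1 : normsq (1 : C) = 1.
Proof. by rewrite /normsq /= expr0n /= expr1n addr0. Qed.

Lemma normsq_gt0 (z : C) : z != 0 -> 0 < normsq z.
Proof.
move=> nz; rewrite lt_def normsq_ge0 andbT; apply: contra nz.
rewrite /normsq paddr_eq0 ?sqr_ge0 // !sqrf_eq0 => /andP[/eqP h1 /eqP h2].
by apply/eqP; case: z h1 h2 => x y /= -> ->.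
Qed.

Lemma normsq_natmul (z : C) N : normsq (N%:R * z) = N%:R ^+ 2 * normsq z.
Proof.
rewrite -(rmorph_nat (@real_complex R)).
by case: z => x y; rewrite /normsq /=; ring.
Qed.

Lemma sum_ge_term (F : nat -> R) n j : (forall k, 0 <= F k) -> (j < n)%N ->
  F j <= \sum_(k < n) F k.
Proof.
move=> F0 jn; rewrite (bigD1 (Ordinal jn)) //= lerDl.
by apply: sumr_ge0 => i _.
Qed.

Lemma single_sum (x : nat -> C) j n : (forall k, k != j -> x k = 0) ->
  \sum_(k < n) normsq (x k) = if (j < n)%N then normsq (x j) else 0.
Proof.
move=> H; elim: n => [|n IH]; first by rewrite big_ord0.
rewrite big_ord_recr /= IH.
case: (ltngtP j n) => [jn|nj|<-].
- by rewrite ltnS (ltnW jn) (H n) ?normsq0 ?addr0 // gtn_eqF.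
- have -> : (j < n.+1)%N = false by rewrite ltnNge nj.
  by rewrite (H n) ?normsq0 ?addr0 // ltn_eqF.
- by rewrite ltnSn add0r.
Qed.

Lemma lower_sum (x : nat -> C) j c : (forall k, (j < k)%N -> x k = c) ->
  forall n, (n - j.+1)%:R * normsq c <= \sum_(k < n) normsq (x k).
Proof.
move=> H; elim=> [|n IH]; first by rewrite sub0n mul0r big_ord0.
rewrite big_ord_recr /=.
case: (ltnP j n) => jn.
  rewrite subSn // -natr1 mulrDl mul1r H //; exact: lerD.
have -> : (n.+1 - j.+1)%N = 0%N by rewrite subSS; apply/eqP; rewrite subn_eq0.
by rewrite mul0r addr_ge0 ?normsq_ge0 // sumr_ge0 // => i _; rewrite normsq_ge0.
Qed.

End Norms.

Section Fin.
Variable R : realType.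
Local Notation C := R[i].
Variable a : R.
Local Notation P := (pseq a).
Local Notation Q := (qseq a).

Lemma adj_char (d g : nat -> C) f :
  ipH Q (Epd P d f) g = ipH Q f (adjcoef d g).
Proof.
have [_ fE] := coords_is (@sizeQ R a) f.
rewrite {1}fE (Epd_sum (@sizeP R a)) (ipH_sum (@sizeQ R a) _ _ (fun k => Epd P d (Q k))) [RHS]/ipH.
by apply: eq_bigr => i _; rewrite ipH_Tq.
Qed.

Lemma adj_unique (d g h : nat -> C) :
  (forall f, ipH Q (Epd P d f) g = ipH Q f h) -> h = adjcoef d g.
Proof.
move=> H; apply: functional_extensionality => k.
have := H (Q k); rewrite ipH_Tq ipH_Qk => E.
by apply: (can_inj conjCK); rewrite E.
Qed.

Lemma part_i (d g : nat -> C) : ell2 g ->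
  (in_dom_adj Q (Epd P d) g <-> ell2 (adjcoef d g)).
Proof.
move=> lg; split.
  by move=> [_ [h [hl hh]]]; rewrite -(@adj_unique _ _ _ hh).
move=> la; split => //; exists (adjcoef d g); split => //.
exact: adj_char.
Qed.

Lemma sum_delta (F : nat -> C) j k :
  \sum_(t < k) F t * delta R j t = if (j < k)%N then F j else 0.
Proof.
elim: k => [|k IH]; first by rewrite big_ord0.
rewrite big_ord_recr /= IH /delta.
case: (ltngtP j k) => [jk|kj|<-].
- by rewrite ltnS (ltnW jk) mulr0 addr0.
- have -> : (j < k.+1)%N = false by rewrite ltnNge kj.
  by rewrite mulr0 addr0.
- by rewrite ltnSn mulr1 add0r.
Qed.

Lemma adj_delta (d : nat -> C) j k :
  adjcoef d (delta R j) k =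
  if (k < j)%N then 0 else if k == j then (d j)^* else (d j)^* - (d j.+1)^*.
Proof.
rewrite /adjcoef (sum_delta (fun t => (d t)^* - (d t.+1)^*)) /delta.
case: (ltngtP k j) => [kj|jk|->].
- by rewrite mul0r addr0.
- by rewrite mul0r add0r.
- by rewrite mul1r addr0.
Qed.

Lemma part_iii (d : nat -> C) j :
  in_dom_adj Q (Epd P d) (coords Q (Q j)) <-> (d j)^* - (d j.+1)^* = 0.
Proof.
rewrite coords_Qk.
have ld : ell2 (delta R j).
  exists 1 => n; rewrite (@single_sum R _ j) => [|k kj]; last by rewrite /delta (negPf kj).
  by case: ifP => _; rewrite /delta ?eqxx ?normsq1 ?ler01.
rewrite part_i //; split; last first.
  move=> c0; exists (normsq (d j)^*) => n.
  rewrite (@single_sum R _ j) => [|k kj]; last first.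
    rewrite adj_delta (negPf kj); case: ifP => // _; exact: c0.
  rewrite adj_delta ltnn eqxx.
  by case: ifP => _ //; rewrite normsq_ge0.
move=> [M HM]; apply/eqP; apply: contraT => cn.
set c := (d j)^* - (d j.+1)^* in cn *.
have hc := @normsq_gt0 R _ cn.
have Hlow := @lower_sum R (adjcoef d (delta R j)) j c.
have Hk : forall k, (j < k)%N -> adjcoef d (delta R j) k = c.
  by move=> k jk; rewrite adj_delta ltnNge ltnW // gtn_eqF.
pose N := Num.Def.archi_bound (`|M| / normsq c).
have hN := @archi_boundP R (`|M| / normsq c) (divr_ge0 (normr_ge0 _) (ltW hc)).
have := HM (j.+1 + N)%N; have := Hlow Hk (j.+1 + N)%N.
rewrite addKn => h1 h2.
have h3 := le_trans h1 h2.
have : `|M| < N%:R * normsq c.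
  by rewrite -ltr_pdivrMr.
move=> h4; have := lt_le_trans h4 h3.
by rewrite ltNge ler_norm.
Qed.

End Fin.

Section Four.
Variable R : realType.
Local Notation C := R[i].
Variable a : R.
Local Notation P := (pseq a).
Local Notation Q := (qseq a).

Lemma part_iv (d : nat -> C) : Dtilde d ->
  ~ exists M : R, forall f : {poly C}, normH Q (Epd P d f) <= M * normH Q f.
Proof.
move=> [_ [m [n mn]]] [M HM].
have [j hj] : exists j, d j != d j.+1.
  apply: NNPP => H; move/negP: mn; apply.
  have E : forall k, d k = d 0.
    elim=> // k IH; rewrite -IH; case: (d k.+1 =P d k) => // ne; exfalso.
    by apply: H; exists k; apply/eqP => e; apply: ne; rewrite e.
  by rewrite E (E n).
set δ := d j - d j.+1.
have hε : 0 < normsq δ by apply: normsq_gt0; rewrite subr_eq0.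
set ε := normsq δ in hε.
set K := `|M|.
have K0 : 0 <= K by apply: normr_ge0.
set x := K ^+ 2 * (j.+2)%:R / ε.
have hx : 0 <= x by rewrite divr_ge0 ?(ltW hε) // mulr_ge0 ?sqr_ge0.
have hN0 := archi_boundP hx.
set N0 := Num.Def.archi_bound x in hN0.
pose N := N0.+1.
pose L := (j.+1 + N)%N.
pose c := fun i => if (j < i)%N && (i < L)%N then (1 : C) else 0.
pose f := \sum_(i < L) c i *: Q i.
have rf : rep Q L c f by split => // k Lk; rewrite /c [(k < L)%N]ltnNge Lk andbF.
have cf : coords Q f = c := coords_rep (@sizeQ R a) rf.
have nf : normH Q f <= Num.sqrt (L%:R).
  rewrite /normH ler_wsqrtr //.
  rewrite (sum_coords (@sizeQ R a) (fun _ z => normsq z) f L (fun _ => normsq0 R)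
    (size_sumB (@sizeQ R a) _ _)) cf.
  have <- : \sum_(k < L) (1 : R) = L%:R by rewrite sumr_const card_ord.
  apply: ler_sum => i _; rewrite /c; case: ifP => _.
    by rewrite normsq1.
  by rewrite normsq0 ler01.
have cT : coords Q (Epd P d f) j = N%:R * δ.
  rewrite /f (Epd_sum (@sizeP R a)).
  rewrite (coords_sum (@sizeQ R a) L c (fun i => Epd P d (Q i)) j).
  rewrite (eq_bigr (fun i : 'I_L => c i * δ)); last first.
    move=> i _; rewrite coords_Tq /c; case: ifP => [/andP[ji _]|_].
      by rewrite ee_lt.
    by rewrite !mul0r.
  rewrite -mulr_suml; congr (_ * _).
  rewrite /L big_split_ord /= big1 ?add0r; last first.
    by move=> i _; rewrite /c /= ltnNge -ltnS ltn_ord.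
  rewrite (eq_bigr (fun _ => 1)); first by rewrite sumr_const card_ord.
  move=> i _; rewrite /c /= ltn_add2l ltn_ord andbT.
  by rewrite addSn ltnS leq_addr.
have nT : Num.sqrt (N%:R ^+ 2 * ε) <= normH Q (Epd P d f).
  rewrite /normH ler_wsqrtr // -normsq_natmul -cT.
  rewrite (sum_coords (@sizeQ R a) (fun _ z => normsq z) (Epd P d f)
    (maxn (size (Epd P d f)) j.+1) (fun _ => normsq0 R) (leq_maxl _ _)).
  apply: (@sum_ge_term R (fun k => normsq (coords Q (Epd P d f) k))).
    by move=> k; apply: normsq_ge0.
  by rewrite leq_maxr.
have w0 : 0 <= normH Q f by apply: sqrtr_ge0.
have H1 := le_trans nT (HM f).
have H2 : M * normH Q f <= K * Num.sqrt L%:R.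
  apply: le_trans (ler_wpM2r w0 (ler_norm M)) _.
  by rewrite /K; apply: ler_wpM2l.
have H3 := le_trans H1 H2.
have u0 := sqrtr_ge0 (N%:R ^+ 2 * ε).
have v0 := sqrtr_ge0 (L%:R : R).
have H4 := ler_pM u0 u0 H3 H3.
rewrite -expr2 sqr_sqrtr in H4; last by rewrite mulr_ge0 ?sqr_ge0 ?ltW.
rewrite -expr2 exprMn sqr_sqrtr ?ler0n // in H4.
have hA : K ^+ 2 * (j.+2)%:R < N0%:R * ε by rewrite -ltr_pdivrMr.
have eL : (L%:R : R) = j%:R + N0%:R + 2.
  by rewrite /L /N addSn addnS -addn2 !natrD.
have eJ : ((j.+2)%:R : R) = j%:R + 2 by rewrite -addn2 natrD.
have eN : (N%:R : R) = N0%:R + 1 by rewrite /N -natr1.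
rewrite eL eN in H4; rewrite eJ in hA.
have J0 : 0 <= (j%:R : R) by apply: ler0n.
have N00 : 0 <= (N0%:R : R) by apply: ler0n.
move: H4 hA.
set J := (j%:R : R). set n0 := (N0%:R : R). set K2 := K ^+ 2.
have K20 : 0 <= K2 by apply: sqr_ge0.
move=> H4 hA.
have p1 : 0 < (n0 + 1) * ((n0 + 1) * ε - K2 * (J + 2)).
  apply: mulr_gt0; first by lra.
  by nra.
have p2 : 0 <= K2 * (n0 * (J + 1)) by apply: mulr_ge0 => //; apply: mulr_ge0 => //; lra.
nra.
Qed.

End Four.

Local Open Scope complex_scope.

Theorem theorem4 (R : realType) (alpha : R) (d : nat -> R[i]) :
  -1 < alpha -> Dtilde d ->
  let T := Epd (pseq alpha) d in
  let Q := qseq alpha in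
  (* (i) *)
  (forall g, ell2 g -> (in_dom_adj Q T g <-> ell2 (adjcoef d g))) /\
  (* (ii) *)
  (forall g h, in_dom_adj Q T g -> is_adj_value Q T g h -> h = adjcoef d g) /\
  (* (iii) *)
  (forall j : nat,
     in_dom_adj Q T (coords Q (Q j)) <-> (d j)^* - (d j.+1)^* = 0) /\
  (* (iv) *)
  (forall d' : nat -> R[i], Dtilde d' ->
     ~ exists M : R, forall f : {poly R[i]},
         normH Q (Epd (pseq alpha) d' f) <= M * normH Q f).
Proof.
move=> _ _ T Q; rewrite /T /Q.
split; first by move=> g lg; apply: part_i.
split; first by move=> g h _ [hl hh]; apply: adj_unique.
split; first by move=> j; apply: part_iii.
by move=> d' hd'; apply: part_iv.
Qed.
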